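(* Let $C$ be an essentially finite decomposition, isomorphism filling category and $R$ a commutative $\mathbb{Q}$-algebra. An element $\alpha$ of the convolution algebra $([\overline{C}_1,R],\star)$ is invertible if and only if $\alpha(\overline{1}_x)$ is a unit of $R$ for every object $x$. In particular the map $\xi$ constantly equal to $1$ is invertible; its inverse $\mu$ satisfies $\mu(\overline{f})=1$ if $f$ is an isomorphism and, if $f$ is not an isomorphism, $$\mu(\overline{f})=\sum_{n\ge1}(-1)^n\big|\overline{\mathrm{PD}}_n\overline{f}\big|.$$
   Context: Two morphisms $f:x\to y$, $g:z\to w$ are isomorphic if there are isomorphisms $\alpha,\beta$ with $g\alpha=\beta f$; $\overline{f}$ is the class, $\overline{C}_1$ the set of classes. An $n$-decomposition of $\overline{f}$ is a tuple $(f_1,\dots,f_n)$ of composable morphisms with $f_n\cdots f_1=\beta^{-1}f\alpha$ for isomorphisms $\alpha,\beta$; isomorphisms of decompositions are families of isomorphisms between the intermediate objects making all squares commute; $\overline{\mathrm{D}}_n\overline{f}$ is the set of isomorphism classes. For $n\ge2$, $\overline{\mathrm{PD}}_n\overline{f}$ is the set of classes of decompositions with no $f_i$ an isomorphism, and $\overline{\mathrm{PD}}_1\overline{f}=\overline{\mathrm{D}}_1\overline{f}$. $C$ is an essentially finite decomposition category if $\bigsqcup_n\overline{\mathrm{PD}}_n\overline{f}$ is finite for all $\overline f$. $C$ is isomorphism filling if for any commutative square $x\to y_1\to y$, $x\to y_2\to y$ with $y_1\cong y_2$ there is an isomorphism $y_1\to y_2$ making both triangles commute. The convolution product is $(\alpha\star\beta)(\overline{f})=\sum_{\overline{(f_1,f_2)}\in\overline{\mathrm{D}}_2\overline{f}}\alpha(\overline{f}_1)\beta(\overline{f}_2)$.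 *)

(* Defs.v *)
From HB Require Import structures.
From mathcomp Require Import all_boot all_order all_algebra.
From Stdlib Require Import ClassicalEpsilon.
Set Implicit Arguments. Unset Strict Implicit. Unset Printing Implicit Defensive.
Import GRing.Theory.
Local Open Scope ring_scope.

(** * Categories (strict: hom-sets are types, Leibniz equality of morphisms).
    [comp g f] is g ∘ f. *)
Record category := Category {
  Ob : Type;
  Hom : Ob -> Ob -> Type;
  idm : forall x, Hom x x;
  comp : forall x y z, Hom y z -> Hom x y -> Hom x z;
  comp_idl : forall x y (f : Hom x y), comp (idm y) f = f;
  comp_idr : forall x y (f : Hom x y), comp f (idm x) = f;
  comp_assoc : forall x y z w (h : Hom z w) (g : Hom y z) (f : Hom x y),
      comp h (comp g f) = comp (comp h g) f }.
Arguments idm {c} x.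
Arguments comp {c x y z} _ _.
Arguments Hom {c} _ _.

Section Cat.
Variable C : category.

Definition is_iso (x y : Ob C) (f : Hom x y) : Prop :=
  exists g : Hom y x, comp g f = idm x /\ comp f g = idm y.

Record Arr := mkArr { src : Ob C; tgt : Ob C; mor : Hom src tgt }.

(** Isomorphism of morphisms: g a = b f with a, b isomorphisms.
    The set of classes \overline{C}_1 is the quotient of [Arr] by [arr_iso]. *)
Definition arr_iso (f g : Arr) : Prop :=
  exists (a : Hom (src f) (src g)) (b : Hom (tgt f) (tgt g)),
    is_iso a /\ is_iso b /\ comp (mor g) a = comp b (mor f).

Definition arr_is_iso (f : Arr) : Prop := is_iso (mor f).

Inductive path : Ob C -> Ob C -> Type :=
| pnil : forall x, path x x
| pcons : forall x y z, Hom x y -> path y z -> path x z.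

Fixpoint plen x y (p : path x y) : nat :=
  match p with pnil _ => 0%N | pcons _ _ _ _ q => (plen q).+1 end.

Fixpoint pcomp x y (p : path x y) : Hom x y :=
  match p in path a b return Hom a b with
  | pnil x => idm x
  | pcons _ _ _ f q => comp (pcomp q) f
  end.

Fixpoint pnoniso x y (p : path x y) : Prop :=
  match p with
  | pnil _ => True
  | pcons _ _ _ f q => ~ is_iso f /\ pnoniso q
  end.

Inductive piso : forall x y x' y', Hom x x' -> path x y -> path x' y' -> Prop :=
| piso_nil : forall x x' (a : Hom x x'), is_iso a -> piso a (pnil x) (pnil x')
| piso_cons : forall x y z x' y' z' (a : Hom x x') (b : Hom y y')
    (f : Hom x y) (p : path y z) (f' : Hom x' y') (p' : path y' z'),
    is_iso a -> comp f' a = comp b f -> piso b p p' ->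
    piso a (pcons f p) (pcons f' p').

Record Dec := mkDec { dsrc : Ob C; dtgt : Ob C; dpath : path dsrc dtgt }.

Definition dec_iso (d e : Dec) : Prop :=
  exists a : Hom (dsrc d) (dsrc e), piso a (dpath d) (dpath e).

Definition Dn (n : nat) (f : Arr) (d : Dec) : Prop :=
  plen (dpath d) = n /\ arr_iso (mkArr (pcomp (dpath d))) f.

(** proper n-decompositions: for n >= 2 no factor is an isomorphism;
    PD_1 = D_1. (Only used for n >= 1.) *)
Definition PDn (n : nat) (f : Arr) (d : Dec) : Prop :=
  Dn n f d /\ (n = 1%N \/ pnoniso (dpath d)).

Record Dec2 := mkDec2 { e0 : Ob C; e1 : Ob C; e2 : Ob C;
                        ef1 : Hom e0 e1; ef2 : Hom e1 e2 }.

Definition dec2_iso (d e : Dec2) : Prop :=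
  exists (a : Hom (e0 d) (e0 e)) (b : Hom (e1 d) (e1 e)) (c : Hom (e2 d) (e2 e)),
    [/\ is_iso a, is_iso b, is_iso c,
        comp (ef1 e) a = comp b (ef1 d) & comp (ef2 e) b = comp c (ef2 d)].

Definition D2 (f : Arr) (d : Dec2) : Prop :=
  arr_iso (mkArr (comp (ef2 d) (ef1 d))) f.

Definition fst2 (d : Dec2) : Arr := mkArr (ef1 d).
Definition snd2 (d : Dec2) : Arr := mkArr (ef2 d).

End Cat.

(** * Sets of isomorphism classes via lists of representatives *)
Fixpoint inlist (T : Type) (t : T) (s : seq T) : Prop :=
  match s with [::] => False | u :: s' => u = t \/ inlist t s' end.

Fixpoint pairwise_noniso (T : Type) (E : T -> T -> Prop) (s : seq T) : Prop :=
  match s with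
  | [::] => True
  | t :: s' => (forall u, inlist u s' -> ~ E t u) /\ pairwise_noniso E s'
  end.

Definition repr_list (T : Type) (P : T -> Prop) (E : T -> T -> Prop) (s : seq T) :=
  [/\ forall t, inlist t s -> P t,
      pairwise_noniso E s &
      forall t, P t -> exists2 u, inlist u s & E t u].

Definition nclasses (T : Type) (P : T -> Prop) (E : T -> T -> Prop) (k : nat) :=
  exists2 s, repr_list P E s & size s = k.

Definition ess_finite_decomp (C : category) : Prop :=
  forall f : Arr C, exists N : nat,
    (forall n d, (0 < n)%N -> PDn n f d -> (n <= N)%N) /\
    (forall n, (0 < n)%N -> exists s, repr_list (PDn n f) (@dec_iso C) s).

Definition iso_filling (C : category) : Prop :=
  forall (x y1 y2 y : Ob C) (a1 : Hom x y1) (b1 : Hom y1 y)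
         (a2 : Hom x y2) (b2 : Hom y2 y),
    comp b1 a1 = comp b2 a2 ->
    (exists i : Hom y1 y2, is_iso i) ->
    exists i : Hom y1 y2, [/\ is_iso i, comp i a1 = a2 & comp b2 i = b1].

(** * The convolution algebra [\overline{C}_1, R]
    Elements are functions Arr C -> R constant on isomorphism classes;
    two elements are equal iff they agree pointwise. *)
Section Conv.
Variables (C : category) (R : comUnitRingType).

Definition cls_fun (a : Arr C -> R) : Prop :=
  forall f g, arr_iso f g -> a f = a g.

Definition conv_is (a b c : Arr C -> R) : Prop :=
  forall f : Arr C, exists2 s, repr_list (@D2 C f) (@dec2_iso C) s &
    c f = \sum_(d <- s) a (fst2 d) * b (snd2 d).

Definition conv_unit (f : Arr C) : R :=
  if excluded_middle_informative (arr_is_iso f) then 1 else 0.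

Definition conv_inverse (a b : Arr C -> R) : Prop :=
  [/\ cls_fun b, conv_is a b conv_unit & conv_is b a conv_unit].

Definition conv_invertible (a : Arr C -> R) : Prop :=
  exists b, conv_inverse a b.
End Conv.

(* Main.v *)
Require Import Defs.
From HB Require Import structures.
From mathcomp Require Import all_boot all_order all_algebra.
From mathcomp Require Import ring.
From Stdlib Require Import ClassicalEpsilon Classical.
Import Defs.
Import GRing.Theory.
Set Implicit Arguments. Unset Strict Implicit. Unset Printing Implicit Defensive.

Module Part1.

Section Basics.
Variable C : category.
Implicit Types x y z : Ob C.
Implicit Types f g h : Arr C.

Lemma iso_id x : is_iso (idm x).
Proof. by exists (idm x); rewrite comp_idl. Qed.

Lemma iso_comp x y z (f : Hom x y) (g : Hom y z) :
  is_iso f -> is_iso g -> is_iso (comp g f).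
Proof.
case=> fi [f1 f2] [gi [g1 g2]]; exists (comp fi gi); split.
  by rewrite comp_assoc -(comp_assoc fi) g1 comp_idr.
by rewrite comp_assoc -(comp_assoc g) f2 comp_idr.
Qed.

Lemma iso_inv x y (f : Hom x y) (g : Hom y x) :
  comp g f = idm x -> comp f g = idm y -> is_iso g.
Proof. by move=> H1 H2; exists f. Qed.

Lemma inv_cancel_r x y z (f : Hom x y) (fi : Hom y x) (g : Hom y z) :
  comp fi f = idm x -> comp f fi = idm y -> comp (comp g f) fi = g.
Proof. by move=> _ H; rewrite -comp_assoc H comp_idr. Qed.

Lemma inv_cancel_l x y z (f : Hom y z) (fi : Hom z y) (g : Hom x y) :
  comp fi f = idm y -> comp fi (comp f g) = g.
Proof. by move=> H; rewrite comp_assoc H comp_idl. Qed.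

Lemma iso_cancel_l x y z (f : Hom x y) (g : Hom y z) :
  is_iso g -> is_iso (comp g f) -> is_iso f.
Proof.
case=> gi [g1 g2] H.
have -> : f = comp gi (comp g f) by rewrite inv_cancel_l.
apply: iso_comp => //; exact: iso_inv g1 g2.
Qed.

Lemma iso_cancel_r x y z (f : Hom x y) (g : Hom y z) :
  is_iso f -> is_iso (comp g f) -> is_iso g.
Proof.
case=> fi [f1 f2] H.
have -> : g = comp (comp g f) fi by rewrite inv_cancel_r.
apply: iso_comp => //; exact: iso_inv f1 f2.
Qed.

Lemma arr_iso_refl f : arr_iso f f.
Proof.
exists (idm (src f)), (idm (tgt f)); split; first exact: iso_id.
by split; [exact: iso_id | rewrite comp_idl comp_idr].
Qed.

Lemma arr_iso_sym f g : arr_iso f g -> arr_iso g f.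
Proof.
case: f g => [x y f] [x' y' g] [a [b [[ai [a1 a2]] [[bi [b1 b2]] /= E]]]].
exists ai, bi; split; first exact: iso_inv a1 a2.
split; first exact: iso_inv b1 b2.
rewrite /=.
have -> : comp f ai = comp (comp bi (comp b f)) ai by rewrite inv_cancel_l.
by rewrite -E -comp_assoc -(comp_assoc g) a2 comp_idr.
Qed.

Lemma arr_iso_trans f g h : arr_iso f g -> arr_iso g h -> arr_iso f h.
Proof.
case: f g h => [x y f] [x' y' g] [x'' y'' h] [a [b [Ia [Ib /= E]]]]
  [a' [b' [Ia' [Ib' /= E']]]].
exists (comp a' a), (comp b' b); split; first exact: iso_comp.
split; first exact: iso_comp.
by rewrite /= comp_assoc E' -comp_assoc E comp_assoc.
Qed.

Lemma arr_iso_is_iso f g : arr_iso f g -> arr_is_iso f -> arr_is_iso g.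
Proof.
case: f g => [x y f] [x' y' g] [a [b [[ai [a1 a2]] [Ib /= E]]]] If.
rewrite /arr_is_iso /=.
have -> : g = comp (comp b f) ai by rewrite -E inv_cancel_r.
apply: iso_comp; first exact: iso_inv a1 a2.
exact: iso_comp.
Qed.

Lemma arr_iso_obj_src f g : arr_iso f g -> exists i : Hom (src f) (src g), is_iso i.
Proof. by case=> a [b [Ia _]]; exists a. Qed.

Lemma arr_iso_obj_tgt f g : arr_iso f g -> exists i : Hom (tgt f) (tgt g), is_iso i.
Proof. by case=> a [b [_ [Ib _]]]; exists b. Qed.

Lemma mkArr_eta (f : Arr C) : mkArr (mor f) = f.
Proof. by case: f. Qed.

Lemma arr_iso_precomp x y z (f : Hom y z) (h : Hom x y) :
  is_iso h -> arr_iso (mkArr (comp f h)) (mkArr f).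
Proof.
move=> Ih; exists h, (idm _); split=> //; split; first exact: iso_id.
by rewrite /= comp_idl.
Qed.

Lemma arr_iso_postcomp x y z (f : Hom x y) (h : Hom y z) :
  is_iso h -> arr_iso (mkArr (comp h f)) (mkArr f).
Proof.
case=> hi [h1 h2]; exists (idm _), hi; split; first exact: iso_id.
split; first exact: iso_inv h1 h2.
by rewrite /= comp_idr comp_assoc h1 comp_idl.
Qed.

Lemma arr_iso_ids x y : (exists i : Hom x y, is_iso i) ->
  arr_iso (mkArr (idm x)) (mkArr (idm y)).
Proof.
case=> i Ii; exists i, i; split=> //; split=> //.
by rewrite /= comp_idl comp_idr.
Qed.

End Basics.

End Part1.
Import Part1.

Module Part2.

Section Paths.
Variable C : category.
Implicit Types x y z : Ob C.

Fixpoint papp x y z (p : path x y) {struct p} : path y z -> path x z :=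
  match p in @path _ a b return path b z -> path a z with
  | pnil _ => fun q => q
  | pcons a0 b0 c0 f p' => fun q : path c0 z => pcons f (@papp b0 c0 z p' q)
  end.

Lemma plen_papp x y z (p : path x y) (q : path y z) :
  plen (papp p q) = (plen p + plen q)%N.
Proof. by elim: p q => //= a b c f p IH q; rewrite IH. Qed.

Lemma pcomp_papp x y z (p : path x y) (q : path y z) :
  pcomp (papp p q) = comp (pcomp q) (pcomp p).
Proof.
elim: p q => [a|a b c f p IH] q /=; first by rewrite comp_idr.
by rewrite IH comp_assoc.
Qed.

Lemma pnoniso_papp x y z (p : path x y) (q : path y z) :
  pnoniso p -> pnoniso q -> pnoniso (papp p q).
Proof. by elim: p q => //= a b c f p IH q [H1 H2] Hq; split=> //; apply: IH. Qed.

Fixpoint pisoF x y (p : path x y) {struct p} :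
  forall x' y', Hom x x' -> Hom y y' -> path x' y' -> Prop :=
  match p in @path _ x0 y0
    return forall x' y', Hom x0 x' -> Hom y0 y' -> path x' y' -> Prop with
  | pnil x0 => fun x' y' a e p' =>
      match p' in @path _ x1 y1 return Hom x0 x1 -> Hom x0 y1 -> Prop with
      | pnil _ => fun a e => is_iso a /\ a = e
      | pcons _ _ _ _ _ => fun _ _ => False
      end a e
  | pcons x0 y0 z0 f q => fun x' z' a e p' =>
      match p' in @path _ x1 z1 return Hom x0 x1 -> Hom z0 z1 -> Prop with
      | pnil _ => fun _ _ => False
      | pcons x1 y1 z1 f' q' => fun a e =>
          is_iso a /\ exists b : Hom y0 y1, comp f' a = comp b f /\ pisoF q b e q'
      end a e
  end.

Lemma piso_to_F x y x' y' (a : Hom x x') (p : path x y) (p' : path x' y') :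
  piso a p p' -> exists e, pisoF p a e p'.
Proof.
elim=> {x y x' y' a p p'}.
  by move=> x x' a Ia; exists a.
move=> x y z x' y' z' a b f p f' p' Ia E _ [e He].
by exists e; split=> //; exists b.
Qed.

Lemma F_to_piso x y (p : path x y) : forall x' y' (a : Hom x x') e (p' : path x' y'),
  pisoF p a e p' -> piso a p p'.
Proof.
elim: p => [x0|x0 y0 z0 f q IH] x' y' a e p'; case: p' a e => //=.
  by move=> x1 a e [Ia _]; constructor.
move=> x1 y1 z1 f' q' a e [Ia [b [E H]]].
econstructor; eauto.
Qed.

Lemma pisoF_start x y (p : path x y) : forall x' y' (a : Hom x x') e (p' : path x' y'),
  pisoF p a e p' -> is_iso a.
Proof.
case: p => [x0|x0 y0 z0 f q] x' y' a e p'; case: p' a e => //=.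
  by move=> x1 a e [].
by move=> x1 y1 z1 f' q' a e [].
Qed.

Lemma pisoF_end x y (p : path x y) : forall x' y' (a : Hom x x') e (p' : path x' y'),
  pisoF p a e p' -> is_iso e.
Proof.
elim: p => [x0|x0 y0 z0 f q IH] x' y' a e p'; case: p' a e => //=.
  by move=> x1 a e [Ia <-].
by move=> x1 y1 z1 f' q' a e [_ [b [_ H]]]; apply: IH H.
Qed.

Lemma pisoF_len x y (p : path x y) : forall x' y' (a : Hom x x') e (p' : path x' y'),
  pisoF p a e p' -> plen p = plen p'.
Proof.
elim: p => [x0|x0 y0 z0 f q IH] x' y' a e p'; case: p' a e => //=.
by move=> x1 y1 z1 f' q' a e [_ [b [_ H]]]; rewrite (IH _ _ _ _ _ H).
Qed.

Lemma pisoF_comp x y (p : path x y) : forall x' y' (a : Hom x x') e (p' : path x' y'),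
  pisoF p a e p' -> comp (pcomp p') a = comp e (pcomp p).
Proof.
elim: p => [x0|x0 y0 z0 f q IH] x' y' a e p'; case: p' a e => //=.
  by move=> x1 a e [_ <-]; rewrite comp_idl comp_idr.
move=> x1 y1 z1 f' q' a e [_ [b [E H]]].
by rewrite -comp_assoc E comp_assoc (IH _ _ _ _ _ H) comp_assoc.
Qed.

Lemma pisoF_refl x y (p : path x y) : pisoF p (idm x) (idm y) p.
Proof.
elim: p => [x0|x0 y0 z0 f q IH] /=; first by split=> //; exact: iso_id.
split; first exact: iso_id.
by exists (idm y0); rewrite comp_idl comp_idr.
Qed.

Lemma pisoF_sym x y (p : path x y) : forall x' y' (a : Hom x x') e (p' : path x' y')
  (ai : Hom x' x), pisoF p a e p' -> comp ai a = idm x -> comp a ai = idm x' ->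
  exists ei, pisoF p' ai ei p.
Proof.
elim: p => [x0|x0 y0 z0 f q IH] x' y' a e p'; case: p' a e => //=.
  move=> x1 a e ai [Ia _] H1 H2; exists ai; split=> //; exact: iso_inv H1 H2.
move=> x1 y1 z1 f' q' a e ai [Ia [b [E H]]] H1 H2.
have [bi [b1 b2]] := pisoF_start H.
have [ei Hei] := IH _ _ _ _ _ bi H b1 b2.
exists ei; split; first exact: iso_inv H1 H2.
exists bi; split=> //.
have -> : comp f ai = comp (comp bi (comp b f)) ai by rewrite inv_cancel_l.
by rewrite -E -comp_assoc -(comp_assoc f') H2 comp_idr.
Qed.

Lemma pisoF_trans x y (p : path x y) : forall x' y' (a : Hom x x') e (p' : path x' y')
  x'' y'' (a' : Hom x' x'') e' (p'' : path x'' y''),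
  pisoF p a e p' -> pisoF p' a' e' p'' -> pisoF p (comp a' a) (comp e' e) p''.
Proof.
elim: p => [x0|x0 y0 z0 f q IH] x' y' a e p'; case: p' a e => //=.
  move=> x1 a e x'' y'' a' e' p''; case: p'' a' e' => //= x2 a' e' [Ia <-] [Ia' <-].
  by split=> //; exact: iso_comp.
move=> x1 y1 z1 f' q' a e x'' y'' a' e' p''; case: p'' a' e' => //=.
move=> x2 y2 z2 f'' q'' a' e' [Ia [b [E H]]] [Ia' [b' [E' H']]].
split; first exact: iso_comp.
exists (comp b' b); split; last exact: IH H H'.
by rewrite comp_assoc E' -comp_assoc E comp_assoc.
Qed.

Lemma pisoF_app x y z (p : path x y) (q : path y z) : forall x' y' z'
  (p' : path x' y') (q' : path y' z') (a : Hom x x') b e,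
  pisoF p a b p' -> pisoF q b e q' -> pisoF (papp p q) a e (papp p' q').
Proof.
elim: p q => [x0|x0 y0 z0 f r IH] q x' y' z' p'; case: p' => //=.
  by move=> x1 q' a b e [Ia <-].
move=> x1 y1 z1 f' r' q' a b e [Ia [c [E H]]] Hq.
split=> //; exists c; split=> //; exact: IH H Hq.
Qed.

Lemma pisoF_split x y z (p : path x y) (q : path y z) : forall x' y' z'
  (p' : path x' y') (q' : path y' z') (a : Hom x x') e,
  plen p = plen p' -> pisoF (papp p q) a e (papp p' q') ->
  exists b, pisoF p a b p' /\ pisoF q b e q'.
Proof.
elim: p q => [x0|x0 y0 z0 f r IH] q x' y' z' p'; case: p' => //=.
  move=> x1 q' a e _ H; exists a; split=> //; split=> //; exact: pisoF_start H.
move=> x1 y1 z1 f' r' q' a e [Hl] [Ia [c [E H]]].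
have [b [H1 H2]] := IH _ _ _ _ _ _ _ _ Hl H.
by exists b; split=> //; split=> //; exists c.
Qed.

Hypothesis HF : iso_filling C.

Lemma pisoF_reanchor x y (q : path x y) : forall x' y' (d0 : Hom x x') de (q' : path x' y')
  (s : Hom x x') (t : Hom y y'),
  pisoF q d0 de q' -> is_iso s -> is_iso t -> comp (pcomp q') s = comp t (pcomp q) ->
  pisoF q s t q'.
Proof.
elim: q => [x0|x0 y0 z0 f r IH] x' y' d0 de q'; case: q' d0 de => //=.
  by move=> x1 d0 de s t _ Is It; rewrite comp_idl comp_idr.
move=> x1 y1 z1 f' r' d0 de s t [_ [b [E H]]] Is It Ec.
have Ib := pisoF_start H.
have [i [Ii E1 E2]] : exists i : Hom y0 y1,
    [/\ is_iso i, comp i f = comp f' s & comp (pcomp r') i = comp t (pcomp r)].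
  apply: HF; last by exists b.
  by rewrite comp_assoc Ec comp_assoc.
split=> //; exists i; split; first by [].
exact: IH H Ii It E2.
Qed.

End Paths.

End Part2.
Import Part2.

Module Part3.

Section Decs.
Variable C : category.
Implicit Types x y z : Ob C.
Implicit Types d : Dec C.
Implicit Types D : Dec2 C.

Lemma dec_isoP d d' : dec_iso d d' <-> exists a e, pisoF (dpath d) a e (dpath d').
Proof.
split; first by case=> a /piso_to_F [e H]; exists a, e.
by case=> a [e H]; exists a; exact: F_to_piso H.
Qed.

Lemma dec_iso_refl d : dec_iso d d.
Proof. by apply/dec_isoP; exists (idm _), (idm _); exact: pisoF_refl. Qed.

Lemma dec_iso_sym d d' : dec_iso d d' -> dec_iso d' d.
Proof.
case/dec_isoP=> a [e H]; have [ai [a1 a2]] := pisoF_start H.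
have [ei Hi] := pisoF_sym H a1 a2.
by apply/dec_isoP; exists ai, ei.
Qed.

Lemma dec_iso_trans d d' d'' : dec_iso d d' -> dec_iso d' d'' -> dec_iso d d''.
Proof.
case/dec_isoP=> a [e H]; case/dec_isoP=> a' [e' H'].
by apply/dec_isoP; exists (comp a' a), (comp e' e); exact: pisoF_trans H H'.
Qed.

Lemma dec2_iso_refl D : dec2_iso D D.
Proof.
exists (idm _), (idm _), (idm _); split; try exact: iso_id.
  by rewrite comp_idl comp_idr.
by rewrite comp_idl comp_idr.
Qed.

Lemma dec2_iso_sym D D' : dec2_iso D D' -> dec2_iso D' D.
Proof.
case: D D' => [x y z f g] [x' y' z' f' g'] [a [b [c [[ai [a1 a2]] [bi [b1 b2]] [ci [c1 c2]] /= E1 E2]]]].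
exists ai, bi, ci; split; [exact: iso_inv a1 a2|exact: iso_inv b1 b2|exact: iso_inv c1 c2| |].
  rewrite /=.
  have -> : comp f ai = comp (comp bi (comp b f)) ai by rewrite inv_cancel_l.
  by rewrite -E1 -comp_assoc -(comp_assoc f') a2 comp_idr.
rewrite /=.
have -> : comp g bi = comp (comp ci (comp c g)) bi by rewrite inv_cancel_l.
by rewrite -E2 -comp_assoc -(comp_assoc g') b2 comp_idr.
Qed.

Lemma dec2_iso_trans D D' D'' : dec2_iso D D' -> dec2_iso D' D'' -> dec2_iso D D''.
Proof.
case: D D' D'' => [x y z f g] [x' y' z' f' g'] [x'' y'' z'' f'' g'']
  [a [b [c [Ia Ib Ic /= E1 E2]]]] [a' [b' [c' [Ia' Ib' Ic' /= E1' E2']]]].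
exists (comp a' a), (comp b' b), (comp c' c); split; try exact: iso_comp.
  by rewrite /= comp_assoc E1' -comp_assoc E1 comp_assoc.
by rewrite /= comp_assoc E2' -comp_assoc E2 comp_assoc.
Qed.

Lemma dec2_iso_comp D D' : dec2_iso D D' ->
  arr_iso (mkArr (comp (ef2 D) (ef1 D))) (mkArr (comp (ef2 D') (ef1 D'))).
Proof.
case: D D' => [x y z f g] [x' y' z' f' g'] [a [b [c [Ia Ib Ic /= E1 E2]]]].
exists a, c; split=> //; split=> //=.
by rewrite -comp_assoc E1 comp_assoc E2 comp_assoc.
Qed.

Lemma dec2_iso_fst D D' : dec2_iso D D' -> arr_iso (fst2 D) (fst2 D').
Proof. by case=> a [b [c [Ia Ib Ic E1 E2]]]; exists a, b. Qed.

Lemma dec2_iso_snd D D' : dec2_iso D D' -> arr_iso (snd2 D) (snd2 D').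
Proof. by case=> a [b [c [Ia Ib Ic E1 E2]]]; exists b, c. Qed.

Lemma D2_iso (f : Arr C) D D' : D2 f D -> dec2_iso D D' -> D2 f D'.
Proof.
move=> H HD; apply: arr_iso_trans H.
exact/arr_iso_sym/dec2_iso_comp.
Qed.

Lemma PDn_arr n (f g : Arr C) d : arr_iso f g -> PDn n f d -> PDn n g d.
Proof.
by move=> Hfg [[Hl Hi] H]; split=> //; split=> //; exact: arr_iso_trans Hfg.
Qed.

Lemma PDn_iso n (f : Arr C) d d' : PDn n f d -> dec_iso d d' -> PDn n f d'.
Proof.
move=> [[Hl Hi] H] /dec_isoP [a [e He]].
have Hl' := pisoF_len He; have Hc := pisoF_comp He.
split; first split.
- by rewrite -Hl'.
- apply: arr_iso_trans Hi; apply: arr_iso_sym.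
  exists a, e; split; first exact: pisoF_start He.
  by split; [exact: pisoF_end He | exact: Hc].
case: H => [->|H]; [by left | right].
have : forall x y (p : path x y) x' y' (a : Hom x x') e (p' : path x' y'),
    pisoF p a e p' -> pnoniso p -> pnoniso p'.
  move=> x y p; elim: p => [x0|x0 y0 z0 f0 q IH] x' y' a0 e0 p'; case: p' a0 e0 => //=.
  move=> x1 y1 z1 f' q' a0 e0 [Ia [b [E Hq]]] [Hf Hq'].
  split; last exact: IH Hq Hq'.
  move=> If'; apply: Hf.
  have Hb := pisoF_start Hq.
  apply: (@iso_cancel_l _ _ _ _ f0 b) => //.
  by rewrite -E; exact: iso_comp.
by move/(_ _ _ _ _ _ _ _ _ He); apply.
Qed.

Lemma path_split x y (p : path x y) m : (m <= plen p)%N ->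
  exists w (p1 : path x w) (p2 : path w y), p = papp p1 p2 /\ plen p1 = m.
Proof.
elim: p m => [x0|x0 y0 z0 f q IH] m.
  rewrite leqn0 => /eqP ->; by exists x0, (pnil x0), (pnil x0).
case: m => [|m] Hm.
  by exists x0, (pnil x0), (pcons f q).
have [w [p1 [p2 [-> Hl]]]] := IH m Hm.
by exists w, (pcons f p1), p2; rewrite /= Hl.
Qed.

Definition pre x y z (h : Hom x y) (p : path y z) : path x z :=
  match p in @path _ a b return Hom x a -> path x b with
  | pnil _ => fun h => pcons h (pnil _)
  | pcons _ _ _ f q => fun h => pcons (comp f h) q
  end h.

Lemma pcomp_pre x y z (h : Hom x y) (p : path y z) :
  pcomp (pre h p) = comp (pcomp p) h.
Proof. by case: p h => [y0|y0 w0 z0 f q] h /=; rewrite ?comp_assoc. Qed.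

Lemma plen_pre x y z (h : Hom x y) (p : path y z) :
  (0 < plen p)%N -> plen (pre h p) = plen p.
Proof. by case: p h. Qed.

Lemma pnoniso_pre x y z (h : Hom x y) (p : path y z) :
  is_iso h -> (0 < plen p)%N -> pnoniso p -> pnoniso (pre h p).
Proof.
case: p h => //= y0 w0 z0 f q h Ih _ [Hf Hq]; split=> //.
by move=> H; apply: Hf; exact: iso_cancel_r H.
Qed.

Lemma pisoF_pre x y z (h : Hom x y) (p : path y z) :
  is_iso h -> (0 < plen p)%N -> exists e, pisoF (pre h p) h e p.
Proof.
case: p h => //= y0 w0 z0 f q h Ih _.
exists (idm _); split=> //; exists (idm _); split; first by rewrite comp_idl.
exact: pisoF_refl.
Qed.

Lemma pnoniso_comp_nn x y (p : path x y) : pnoniso p -> (0 < plen p)%N ->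
  (forall x y z (f : Hom x y) (g : Hom y z), is_iso (comp g f) -> is_iso f) ->
  ~ is_iso (pcomp p).
Proof.
case: p => //= x0 y0 z0 f q [Hf _] _ NI H; apply: Hf; exact: NI H.
Qed.

End Decs.

Section NIsec.
Variable C : category.
Hypothesis HE : ess_finite_decomp C.
Implicit Types x y z : Ob C.

Fixpoint ecat y z (e : Hom y y) (k : nat) (q : path y z) : path y z :=
  match k with 0 => q | k'.+1 => pcons e (ecat e k' q) end.

Lemma NI x y z (f : Hom x y) (g : Hom y z) : is_iso (comp g f) -> is_iso f.
Proof.
move=> Hu; apply: NNPP => Hf.
have Hg : ~ is_iso g by move=> Ig; apply: Hf; exact: iso_cancel_l Hu.
case: (Hu) => ui [u1 u2].
set k := comp ui g.
have Hk : comp k f = idm x by rewrite /k -comp_assoc.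
set e := comp f k.
have Hee : comp e e = e.
  by rewrite /e -comp_assoc (comp_assoc k f k) Hk comp_idl.
have Hge : comp g e = g.
  by rewrite /e /k comp_assoc comp_assoc u2 comp_idl.
have He : ~ is_iso e.
  case=> ei [e1 e2]; apply: Hf.
  have Eid : e = idm y.
    by rewrite -e1 -{2}Hee comp_assoc e1 comp_idl.
  by exists k; split=> //; rewrite -/e Eid.
have [N [HN _]] := HE (mkArr (comp g f)).
pose P k0 := pcons f (ecat e k0 (pcons g (pnil z))).
have Hc : forall k0, pcomp (ecat e k0 (pcons g (pnil z))) = comp (idm z) g.
  elim=> //= k0 ->; by rewrite comp_idl Hge.
have Hpd : PDn (N.+2) (mkArr (comp g f)) (mkDec (P N)).
  split; last right.
    split; first by rewrite /= /P /=; elim: (N) => //= n ->.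
    by rewrite /= Hc comp_idl; exact: arr_iso_refl.
  rewrite /P /=; split=> //; elim: (N) => //= n IH; by split.
by have := HN _ _ (ltn0Sn _) Hpd => /ltnW; rewrite ltnn.
Qed.

Lemma NI2 x y z (f : Hom x y) (g : Hom y z) : is_iso (comp g f) -> is_iso g.
Proof. by move=> H; exact: (iso_cancel_r (NI H) H). Qed.

End NIsec.

End Part3.
Import Part3.

Module Part4.
Local Open Scope ring_scope.

Section InL.
Variable T : Type.
Implicit Types s t : seq T.

Lemma inlist_app (x : T) s t : inlist x (s ++ t) <-> inlist x s \/ inlist x t.
Proof.
elim: s => /= [|a s IH]; first by split=> [H|[]//]; right.
split; first by case=> [->|/IH [H|H]]; [left; left| left; right| right].
by case=> [[->|H]|H]; [left | right; apply/IH; left | right; apply/IH; right].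
Qed.

Lemma inlist_split (x : T) s : inlist x s -> exists s1 s2, s = s1 ++ x :: s2.
Proof.
elim: s => //= a s IH [->|/IH [s1 [s2 ->]]]; first by exists [::], s.
by exists (a :: s1), s2.
Qed.

Lemma inlist_map (U : Type) (h : U -> T) (y : T) (s : seq U) :
  inlist y (map h s) <-> exists x, inlist x s /\ y = h x.
Proof.
elim: s y => /= [|a s IH] y; first by split=> // [[x []]].
split; first by case=> [<-|/IH [x [H ->]]]; [exists a; split=> //; left | exists x; split=> //; right].
case=> x [[<-|H] ->]; first by left.
by right; apply/IH; exists x.
Qed.

Lemma inlist_flatten (y : T) (ss : seq (seq T)) :
  inlist y (flatten ss) <-> exists s, inlist s ss /\ inlist y s.
Proof.
elim: ss => /= [|s ss IH]; first by split=> // [[s []]].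
rewrite inlist_app; split.
  by case=> [H|/IH [s' [H1 H2]]]; [exists s; split=> //; left | exists s'; split=> //; right].
by case=> s' [[->|H1] H2]; [left | right; apply/IH; exists s'].
Qed.

End InL.

Section Lists.
Variable T : Type.
Implicit Types s t : seq T.
Variable E : T -> T -> Prop.
Hypothesis Er : forall x, E x x.
Hypothesis Es : forall x y, E x y -> E y x.
Hypothesis Et : forall x y z, E x y -> E y z -> E x z.

Lemma pw_app s t : pairwise_noniso E s -> pairwise_noniso E t ->
  (forall u v, inlist u s -> inlist v t -> ~ E u v) -> pairwise_noniso E (s ++ t).
Proof.
elim: s => //= a s IH [H1 H2] Ht Hx; split; last first.
  by apply: IH => // u v Hu Hv; apply: Hx => //; right.
move=> u /inlist_app [Hu|Hu]; first exact: H1.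
by apply: Hx => //; left.
Qed.

Lemma pw_split s1 b s2 : pairwise_noniso E (s1 ++ b :: s2) ->
  pairwise_noniso E (s1 ++ s2) /\ (forall x, inlist x (s1 ++ s2) -> ~ E b x).
Proof.
elim: s1 => /= [|a s1 IH] [H1 H2]; first by split=> // x; exact: H1.
have [IH1 IH2] := IH H2.
split.
  split=> // u Hu; apply: H1; apply/inlist_app; case/inlist_app: Hu => Hu; [left|right; right] => //.
move=> x [<-|Hx]; last exact: IH2.
move=> /Es; apply: H1; apply/inlist_app; by right; left.
Qed.

Lemma repr_sum (V : zmodType) (F : T -> V) (HF : forall x y, E x y -> F x = F y) :
  forall s (P : T -> Prop) t, repr_list P E s -> repr_list P E t ->
  \sum_(x <- s) F x = \sum_(x <- t) F x.
Proof.
elim=> [|a s IH] P t [Hs1 Hs2 Hs3] [Ht1 Ht2 Ht3].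
  case: t Ht1 Ht2 Ht3 => // b t Ht1 _ _.
  by have [u []] := Hs3 b (Ht1 b (or_introl erefl)).
have Pa := Hs1 a (or_introl erefl).
have [b Hb Eab] := Ht3 a Pa.
have [t1 [t2 Et12]] := inlist_split Hb.
rewrite Et12 in Ht1 Ht2 Ht3 *.
have [Hpw Hnb] := pw_split Ht2.
case: Hs2 => Hna Hs2.
rewrite big_cons big_cat big_cons.
have -> : \sum_(x <- s) F x = \sum_(x <- t1 ++ t2) F x.
  apply: (IH (fun x => P x /\ ~ E a x)); split.
  - by move=> x Hx; split; [apply: Hs1; right | exact: Hna].
  - by [].
  - move=> x [Px Nx]; have [u [<-|Hu] Exu] := Hs3 x Px; first by case: Nx; exact: Es.
    by exists u.
  - move=> x Hx; split.
      by apply: Ht1; apply/inlist_app; case/inlist_app: Hx => Hx; [left|right; right].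
    by move=> Eax; apply: (Hnb x Hx); apply: Et Eax; exact: Es.
  - by [].
  - move=> x [Px Nx]; have [u Hu Exu] := Ht3 x Px.
    case/inlist_app: Hu => [Hu|[Hu|Hu]].
    + by exists u => //; apply/inlist_app; left.
    + by case: Nx; apply: Et Eab _; apply: Es; rewrite Hu.
    + by exists u => //; apply/inlist_app; right.
rewrite big_cat (HF _ _ Eab).
by rewrite addrCA.
Qed.

Lemma pw_flatten (A : Type) (E' : A -> A -> Prop) (K : T -> A -> Prop)
  (L : seq A) (M : A -> seq T) :
  pairwise_noniso E' L -> (forall x, inlist x L -> pairwise_noniso E (M x)) ->
  (forall x u, inlist x L -> inlist u (M x) -> K u x) ->
  (forall u v x y, K u x -> K v y -> E u v -> E' x y) ->
  pairwise_noniso E (flatten (map M L)).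
Proof.
move=> HL HM HK HKE; elim: L HL HM HK => //= x L IH [H1 H2] HM HK.
apply: pw_app.
- by apply: HM; left.
- by apply: IH => // [y Hy|y u Hy Hu]; [apply: HM; right | apply: HK => //; right].
move=> u v Hu /inlist_flatten [s [/inlist_map [y [Hy ->]] Hv]] Euv.
apply: (H1 y Hy); apply: HKE Euv; apply: HK => //; [left | right] => //.
Qed.

End Lists.

End Part4.
Import Part4.

Module Part5.

Section Choices.
Variable C : category.
Hypothesis HE : ess_finite_decomp C.
Implicit Types x y z : Ob C.
Implicit Types f g : Arr C.
Implicit Types d : Dec C.
Implicit Types D : Dec2 C.

Definition PD2 f D := D2 f D /\ ~ is_iso (ef1 D) /\ ~ is_iso (ef2 D).

Definition lst n f : seq (Dec C) :=
  match excluded_middle_informative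
          (exists s, repr_list (PDn n f) (@dec_iso C) s) with
  | left H => proj1_sig (constructive_indefinite_description _ H)
  | right _ => [::]
  end.

Lemma lstP n f : (0 < n)%N -> repr_list (PDn n f) (@dec_iso C) (lst n f).
Proof.
move=> Hn; rewrite /lst; case: excluded_middle_informative => [H|[]].
  exact: proj2_sig (constructive_indefinite_description _ H).
by have [N [_ H]] := HE f; apply: H.
Qed.

Definition bnd f : nat :=
  proj1_sig (constructive_indefinite_description _ (HE f)).

Lemma bndP f n d : (0 < n)%N -> PDn n f d -> (n <= bnd f)%N.
Proof.
rewrite /bnd; case: constructive_indefinite_description => N [H _] /=; exact: H.
Qed.

Lemma repr_list_ext T (P Q : T -> Prop) (E : T -> T -> Prop) (s : seq T) :
  (forall t : T, P t <-> Q t) -> repr_list P E s -> repr_list Q E s.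
Proof.
move=> HPQ [H1 H2 H3]; split=> //; first by move=> t /H1 /HPQ.
by move=> t /HPQ /H3.
Qed.

Lemma PDn_arr_iff n f g d : arr_iso f g -> (PDn n f d <-> PDn n g d).
Proof.
move=> H; split; first exact: PDn_arr.
by apply: PDn_arr; exact: arr_iso_sym.
Qed.

Lemma dec_eta d : mkDec (dpath d) = d.
Proof. by case: d. Qed.

Lemma dec2_eta D : mkDec2 (ef1 D) (ef2 D) = D.
Proof. by case: D. Qed.

Definition of2 D : Dec C := mkDec (pcons (ef1 D) (pcons (ef2 D) (pnil _))).

Lemma len2 d : plen (dpath d) = 2%N -> exists D, d = of2 D.
Proof.
case: d => x y p /=; case: p => // x0 y0 z0 f0 q; case: q f0 => // y1 w1 z1 f1 r f0.
by case: r f1 => // z2 f1 _; exists (mkDec2 f0 f1).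
Qed.

Lemma of2_PD n f D : n = 2%N -> (PDn n f (of2 D) <-> PD2 f D).
Proof.
move=> -> ; rewrite /PDn /Dn /PD2 /D2 /=; rewrite comp_idl; split.
  by case=> [[_ H] [//|[H1 [H2 _]]]].
by case=> H [H1 H2]; split=> //; right.
Qed.

Lemma of2_iso D D' : dec_iso (of2 D) (of2 D') <-> dec2_iso D D'.
Proof.
rewrite dec_isoP; split.
  case=> a [e /= [Ia [b [E1 [Ib [c [E2 [Ic Ece]]]]]]]].
  by exists a, b, c; split.
case=> a [b [c [Ia Ib Ic E1 E2]]].
by exists a, c; split=> //; exists b; split=> //; split=> //; exists c.
Qed.

Definition L2 f : seq (Dec2 C) :=
  match excluded_middle_informative
          (exists s, repr_list (PD2 f) (@dec2_iso C) s) with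
  | left H => proj1_sig (constructive_indefinite_description _ H)
  | right _ => [::]
  end.

Lemma L2P f : repr_list (PD2 f) (@dec2_iso C) (L2 f).
Proof.
rewrite /L2; case: excluded_middle_informative => [H|[]].
  exact: proj2_sig (constructive_indefinite_description _ H).
have [H1 H2 H3] := @lstP 2 f isT.
have Hall : forall d, inlist d (lst 2 f) -> exists D, d = of2 D.
  by move=> d /H1 [[Hl _] _]; apply: len2.
have [s Es] : exists s : seq (Dec2 C), lst 2 f = map of2 s.
  elim: (lst 2 f) Hall => [|d l IH] Hl; first by exists [::].
  have [D ->] := Hl d (or_introl erefl).
  have [s ->] := IH (fun d' H => Hl d' (or_intror H)).
  by exists (D :: s).
exists s; rewrite Es in H1 H2 H3; split.
- move=> D HD; apply: (proj1 (@of2_PD 2 f D erefl)); apply: H1.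
  by apply/inlist_map; exists D.
- elim: (s) H2 => //= D l IH [Ha Hb]; split; last exact: IH.
  move=> D' HD' /of2_iso; apply: Ha; apply/inlist_map; by exists D'.
- move=> D /(proj2 (@of2_PD 2 f D erefl)) /H3 [d /inlist_map [D' [HD' ->]] /of2_iso HDD'].
  by exists D'.
Qed.

Lemma PDn_noniso n f c : (0 < n)%N -> PDn n f c -> ~ arr_is_iso f -> pnoniso (dpath c).
Proof.
move=> Hn [[Hl Hi] [E1|H]] Hf //; rewrite E1 in Hl.
case: c Hl Hi => x y p /=; case: p => // x0 y0 z0 f0 q; case: q f0 => // z1 f0 _ Hi.
split=> // If0; apply: Hf; apply: (arr_iso_is_iso Hi).
by rewrite /arr_is_iso /= comp_idl.
Qed.

Lemma pnoniso_papp_inv x y z (p : path x y) (q : path y z) :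
  pnoniso (papp p q) -> pnoniso p /\ pnoniso q.
Proof.
elim: p q => //= a b c f p IH q [Hf H]; have [H1 H2] := IH q H; by split.
Qed.

End Choices.

End Part5.
Import Part5.

Module Part6.

Section Glue.
Variable C : category.
Hypothesis HE : ess_finite_decomp C.
Hypothesis HF : iso_filling C.
Implicit Types x y z : Ob C.
Implicit Types f g : Arr C.
Implicit Types d : Dec C.
Implicit Types D : Dec2 C.

Definition good D (a b : Dec C) (h : Hom (dtgt a) (dsrc b)) :=
  is_iso h /\ dec2_iso (mkDec2 (pcomp (dpath a)) (comp (pcomp (dpath b)) h)) D.
Arguments good : clear implicits.

Definition glue D (a b : Dec C) : Dec C :=
  match excluded_middle_informative (exists h, good D a b h) with
  | left H => mkDec (papp (dpath a)
                 (pre (proj1_sig (constructive_indefinite_description _ H)) (dpath b)))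
  | right _ => a
  end.

Lemma glueP D a b : (exists h, good D a b h) ->
  exists h, good D a b h /\ glue D a b = mkDec (papp (dpath a) (pre h (dpath b))).
Proof.
rewrite /glue; case: excluded_middle_informative => // H _.
case: constructive_indefinite_description => h Hh /=; by exists h.
Qed.

Lemma good_exists D a b :
  arr_iso (mkArr (pcomp (dpath a))) (fst2 D) ->
  arr_iso (mkArr (pcomp (dpath b))) (snd2 D) -> exists h, good D a b h.
Proof.
case=> /= a1 [b1 [Ia1 [Ib1 /= E1]]] [a2 [b2 [[a2i [a21 a22]] [Ib2 /= E2]]]].
exists (comp a2i b1); split; first by apply: iso_comp => //; exact: iso_inv a21 a22.
exists a1, b1, b2; split=> //=.
by rewrite comp_assoc -E2 -comp_assoc (comp_assoc a2) a22 comp_idl.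
Qed.

Lemma split_iso (u v : Dec C) w1 (p1 : path (dsrc u) w1) (p2 : path w1 (dtgt u))
  w2 (q1 : path (dsrc v) w2) (q2 : path w2 (dtgt v)) :
  dpath u = papp p1 p2 -> dpath v = papp q1 q2 -> plen p1 = plen q1 ->
  dec_iso u v -> exists a b e, pisoF p1 a b q1 /\ pisoF p2 b e q2.
Proof.
move=> Eu Ev Hl /dec_isoP [a [e H]]; rewrite Eu Ev in H.
have [b [H1 H2]] := pisoF_split Hl H; by exists a, b, e.
Qed.

Lemma pisoF_dec2 x y z x' y' z' (p1 : path x y) (p2 : path y z) (q1 : path x' y') (q2 : path y' z')
  a b e : pisoF p1 a b q1 -> pisoF p2 b e q2 ->
  dec2_iso (mkDec2 (pcomp p1) (pcomp p2)) (mkDec2 (pcomp q1) (pcomp q2)).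
Proof.
move=> H1 H2; exists a, b, e; split.
- exact: pisoF_start H1.
- exact: pisoF_start H2.
- exact: pisoF_end H2.
- exact: pisoF_comp H1.
- exact: pisoF_comp H2.
Qed.

Section FixedF.
Variables (f : Arr C) (m k : nat).
Hypotheses (Hm : (0 < m)%N) (Hk : (0 < k)%N).

Definition Gl : seq (Dec C) :=
  flatten (map (fun D => flatten (map (fun a =>
     flatten (map (fun b => [:: glue D a b]) (lst k (snd2 D))))
     (lst m (fst2 D)))) (L2 f)).

Lemma Gl_good D a b : inlist D (L2 f) -> inlist a (lst m (fst2 D)) ->
  inlist b (lst k (snd2 D)) -> exists h, good D a b h.
Proof.
move=> HD Ha Hb.
have [[_ Ha'] _] := (let: And3 H _ _ := @lstP _ HE m (fst2 D) Hm in H) a Ha.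
have [[_ Hb'] _] := (let: And3 H _ _ := @lstP _ HE k (snd2 D) Hk in H) b Hb.
exact: good_exists.
Qed.

Lemma inlist_Gl c : inlist c Gl <-> exists D a b, [/\ inlist D (L2 f),
  inlist a (lst m (fst2 D)), inlist b (lst k (snd2 D)) & c = glue D a b].
Proof.
rewrite /Gl inlist_flatten; split.
  case=> s [/inlist_map [D [HD ->]]] /inlist_flatten [s' [/inlist_map [a [Ha ->]]]].
  case/inlist_flatten=> s'' [/inlist_map [b [Hb ->]]] [<-|//].
  by exists D, a, b.
case=> D [a [b [HD Ha Hb ->]]].
exists (flatten (map (fun a =>
     flatten (map (fun b => [:: glue D a b]) (lst k (snd2 D)))) (lst m (fst2 D)))).
split; first by apply/inlist_map; exists D.
apply/inlist_flatten; eexists; split; first by apply/inlist_map; exists a.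
apply/inlist_flatten; eexists; split; first by apply/inlist_map; exists b.
by left.
Qed.


Lemma glue_split D a b : inlist D (L2 f) -> inlist a (lst m (fst2 D)) ->
  inlist b (lst k (snd2 D)) ->
  exists w (p1 : path (dsrc (glue D a b)) w) (p2 : path w (dtgt (glue D a b))),
    [/\ dpath (glue D a b) = papp p1 p2, plen p1 = m,
        dec2_iso (mkDec2 (pcomp p1) (pcomp p2)) D,
        dec_iso (mkDec p1) a & dec_iso (mkDec p2) b].
Proof.
move=> HD Ha Hb.
have [h [[Ih Hg] ->]] := glueP (Gl_good HD Ha Hb).
have [[Hla _] _] := (let: And3 H _ _ := @lstP _ HE m (fst2 D) Hm in H) a Ha.
have [[Hlb _] _] := (let: And3 H _ _ := @lstP _ HE k (snd2 D) Hk in H) b Hb.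
exists (dtgt a), (dpath a), (pre h (dpath b)); split=> //.
- by rewrite /= pcomp_pre.
- by apply/dec_isoP; exists (idm _), (idm _); exact: pisoF_refl.
apply/dec_isoP; have [e He] := pisoF_pre (p := dpath b) Ih (ltac:(by rewrite Hlb)).
by exists h, e.
Qed.

Lemma Gl_mem c : inlist c Gl -> PDn (m + k) f c.
Proof.
case/inlist_Gl=> D [a [b [HD Ha Hb ->]]].
have [h [[Ih Hg] ->]] := glueP (Gl_good HD Ha Hb).
have [[Hla _] _] := (let: And3 H _ _ := @lstP _ HE m (fst2 D) Hm in H) a Ha.
have [[Hlb _] _] := (let: And3 H _ _ := @lstP _ HE k (snd2 D) Hk in H) b Hb.
have [HD2 [N1 N2]] := (let: And3 H _ _ := L2P HE f in H) D HD.
have Pa' := PDn_noniso Hm (let: And3 H _ _ := @lstP _ HE m (fst2 D) Hm in H a Ha) N1.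
have Pb' := PDn_noniso Hk (let: And3 H _ _ := @lstP _ HE k (snd2 D) Hk in H b Hb) N2.
split; last right.
  split; first by rewrite /= plen_papp plen_pre ?Hla ?Hlb.
  rewrite /= pcomp_papp pcomp_pre.
  exact: (arr_iso_trans (dec2_iso_comp Hg) HD2).
apply: pnoniso_papp => //; apply: pnoniso_pre => //; by rewrite Hlb.
Qed.

Lemma Gl_pw : pairwise_noniso (@dec_iso C) Gl.
Proof.
apply: (pw_flatten (E := @dec_iso C) (E' := @dec2_iso C)
  (K := fun c D => exists w (p1 : path (dsrc c) w) (p2 : path w (dtgt c)),
     [/\ dpath c = papp p1 p2, plen p1 = m & dec2_iso (mkDec2 (pcomp p1) (pcomp p2)) D])).
- by case: (L2P HE f).
- move=> D HD.
  apply: (pw_flatten (E := @dec_iso C) (E' := @dec_iso C)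
    (K := fun c a => exists w (p1 : path (dsrc c) w) (p2 : path w (dtgt c)),
     [/\ dpath c = papp p1 p2, plen p1 = m & dec_iso (mkDec p1) a])).
  + by case: (@lstP _ HE m (fst2 D) Hm).
  + move=> a Ha.
    apply: (pw_flatten (E := @dec_iso C) (E' := @dec_iso C)
      (K := fun c b => exists w (p1 : path (dsrc c) w) (p2 : path w (dtgt c)),
       [/\ dpath c = papp p1 p2, plen p1 = m & dec_iso (mkDec p2) b])).
    * by case: (@lstP _ HE k (snd2 D) Hk).
    * by move=> b _.
    * move=> b u Hb [<-|//].
      have [w [p1 [p2 [E1 E2 _ _ E5]]]] := glue_split HD Ha Hb.
      by exists w, p1, p2.
    * move=> u v b b' [w [p1 [p2 [Eu Hl Hb]]]] [w' [q1 [q2 [Ev Hl' Hb']]]] Huv.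
      have [a0 [b0 [e0 [H1 H2]]]] := split_iso Eu Ev (etrans Hl (esym Hl')) Huv.
      apply: dec_iso_trans (dec_iso_sym Hb) _; apply: dec_iso_trans Hb'.
      by apply/dec_isoP; exists b0, e0.
  + move=> a u Ha /inlist_flatten [s [/inlist_map [b [Hb ->]]] [<-|//]].
    have [w [p1 [p2 [E1 E2 _ E4 _]]]] := glue_split HD Ha Hb.
    by exists w, p1, p2.
  + move=> u v a a' [w [p1 [p2 [Eu Hl Ha]]]] [w' [q1 [q2 [Ev Hl' Ha']]]] Huv.
    have [a0 [b0 [e0 [H1 H2]]]] := split_iso Eu Ev (etrans Hl (esym Hl')) Huv.
    apply: dec_iso_trans (dec_iso_sym Ha) _; apply: dec_iso_trans Ha'.
    by apply/dec_isoP; exists a0, b0.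
- move=> D u HD /inlist_flatten [s [/inlist_map [a [Ha ->]]]].
  case/inlist_flatten=> s' [/inlist_map [b [Hb ->]]] [<-|//].
  have [w [p1 [p2 [E1 E2 E3 _ _]]]] := glue_split HD Ha Hb.
  by exists w, p1, p2.
- move=> u v D D' [w [p1 [p2 [Eu Hl HD]]]] [w' [q1 [q2 [Ev Hl' HD']]]] Huv.
  have [a0 [b0 [e0 [H1 H2]]]] := split_iso Eu Ev (etrans Hl (esym Hl')) Huv.
  apply: dec2_iso_trans (dec2_iso_sym HD) _; apply: dec2_iso_trans HD'.
  exact: pisoF_dec2 H1 H2.
Qed.


Lemma Gl_cover c : PDn (m + k) f c -> exists2 u, inlist u Gl & dec_iso c u.
Proof.
move=> [[Hl Hi] Hn].
have Hnc : pnoniso (dpath c).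
  case: Hn => // E; exfalso; move: E Hm Hk; case: m => // m'; case: k => //= k'.
  by rewrite addnS.
have [w [p1 [p2 [Ec Hl1]]]] := path_split (p := dpath c) (m := m) (ltac:(by rewrite Hl leq_addr)).
rewrite Ec in Hnc; have [N1 N2] := pnoniso_papp_inv Hnc.
have Hl2 : plen p2 = k.
  by move: Hl; rewrite Ec plen_papp Hl1 => /addnI.
have HX : PD2 f (mkDec2 (pcomp p1) (pcomp p2)).
  split; last split.
  - by rewrite /D2 /= -pcomp_papp -Ec.
  - by apply: pnoniso_comp_nn N1 _ (NI HE); rewrite Hl1.
  - by apply: pnoniso_comp_nn N2 _ (NI HE); rewrite Hl2.
have [D HD HXD] := (let: And3 _ _ H := L2P HE f in H) _ HX.
have [a Ha Hpa] := (let: And3 _ _ H := @lstP _ HE m (fst2 D) Hm in H) (mkDec p1)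
  (conj (conj Hl1 (dec2_iso_fst HXD)) (or_intror N1)).
have [b Hb Hpb] := (let: And3 _ _ H := @lstP _ HE k (snd2 D) Hk in H) (mkDec p2)
  (conj (conj Hl2 (dec2_iso_snd HXD)) (or_intror N2)).
have [h [[Ih Hg] Eg]] := glueP (Gl_good HD Ha Hb).
exists (glue D a b); first by apply/inlist_Gl; exists D, a, b.
rewrite Eg; apply/dec_isoP; rewrite /= Ec.
have [p0 [q1 [q2 [I0 I1 I2 /= E1 E2]]]] := dec2_iso_trans HXD (dec2_iso_sym Hg).
have [s0 [s1 Hs]] := proj1 (dec_isoP _ _) Hpa.
have Hs' := pisoF_reanchor HF Hs I0 I1 E1.
have [[lb _] _] := (let: And3 H _ _ := @lstP _ HE k (snd2 D) Hk in H) b Hb.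
have Hpb' : dec_iso (mkDec p2) (mkDec (pre h (dpath b))).
  apply: dec_iso_trans Hpb _; apply: dec_iso_sym; apply/dec_isoP.
  have [e He] := pisoF_pre (p := dpath b) Ih (ltac:(by rewrite lb)).
  by exists h, e.
have [t0 [t1 Ht]] := proj1 (dec_isoP _ _) Hpb'.
have Ht' := pisoF_reanchor HF Ht I1 I2 (ltac:(by rewrite /= pcomp_pre)).
by exists p0, q2; exact: pisoF_app Hs' Ht'.
Qed.

Lemma Gl_repr : repr_list (PDn (m + k) f) (@dec_iso C) Gl.
Proof. split; [exact: Gl_mem | exact: Gl_pw | exact: Gl_cover]. Qed.

End FixedF.
End Glue.

End Part6.
Import Part6.

Module Part7.
Local Open Scope ring_scope.

Section D2list.
Variable C : category.
Hypothesis HE : ess_finite_decomp C.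
Implicit Types f g : Arr C.
Implicit Types D : Dec2 C.

Lemma iso_transport (x y x' y' : Ob C) (g : Hom x y) (g' : Hom x' y') (a : Hom x x') (b : Hom y y') :
  is_iso a -> is_iso b -> comp g' a = comp b g -> is_iso g -> is_iso g'.
Proof.
move=> Ia Ib E Ig; apply: (iso_cancel_r Ia); rewrite E; exact: iso_comp.
Qed.

Lemma dec2_iso_ef1 D D' : dec2_iso D D' -> is_iso (ef1 D) -> is_iso (ef1 D').
Proof. by case=> a [b [c [Ia Ib Ic E1 E2]]]; exact: iso_transport E1. Qed.

Lemma dec2_iso_ef2 D D' : dec2_iso D D' -> is_iso (ef2 D) -> is_iso (ef2 D').
Proof. by case=> a [b [c [Ia Ib Ic E1 E2]]]; exact: iso_transport E2. Qed.

Definition I1 f : Dec2 C := mkDec2 (idm (src f)) (mor f).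
Definition I2 f : Dec2 C := mkDec2 (mor f) (idm (tgt f)).

Lemma D2_I1 f : D2 f (I1 f).
Proof. by rewrite /D2 /= comp_idr mkArr_eta; exact: arr_iso_refl. Qed.

Lemma D2_I2 f : D2 f (I2 f).
Proof. by rewrite /D2 /= comp_idl mkArr_eta; exact: arr_iso_refl. Qed.

Lemma cover1 f D : D2 f D -> is_iso (ef1 D) -> dec2_iso D (I1 f).
Proof.
case: f => x y f; case=> /= a0 [b0 [Ia0 [Ib0 /= E]]] [gi [g1 g2]].
exists a0, (comp a0 gi), b0; split=> //=.
- by apply: iso_comp => //; exact: iso_inv g1 g2.
- by rewrite comp_idl -comp_assoc g1 comp_idr.
by rewrite comp_assoc E -!comp_assoc g2 comp_idr.
Qed.

Lemma cover2 f D : D2 f D -> is_iso (ef2 D) -> dec2_iso D (I2 f).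
Proof.
case: f => x y f; case=> /= a0 [b0 [Ia0 [Ib0 /= E]]] Ig.
exists a0, (comp b0 (ef2 D)), b0; split=> //=.
- exact: iso_comp.
- by rewrite E comp_assoc.
by rewrite comp_idl.
Qed.

Definition D2list f : seq (Dec2 C) :=
  if excluded_middle_informative (arr_is_iso f) then [:: I1 f]
  else I1 f :: I2 f :: L2 f.

Lemma D2listP f : repr_list (D2 f) (@dec2_iso C) (D2list f).
Proof.
rewrite /D2list; case: excluded_middle_informative => Hf.
  split.
  - by move=> D [<-|//]; exact: D2_I1.
  - by split.
  move=> D HD; exists (I1 f); first by left.
  apply: (cover1 HD); apply: (NI HE (g := ef2 D)).
  by apply: (arr_iso_is_iso (arr_iso_sym HD)).
have [L1 L2p L3] := L2P HE f.
split.
- move=> D [<-|[<-|/L1 [H _]]] //; [exact: D2_I1 | exact: D2_I2].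
- split.
    move=> u [<-|Hu] H.
      by apply: Hf; exact: (dec2_iso_ef1 H (iso_id _)).
    by have [_ [N1 _]] := L1 u Hu; apply: N1; exact: dec2_iso_ef1 H (iso_id _).
  split=> //.
  move=> u Hu H; have [_ [_ N2]] := L1 u Hu; apply: N2; exact: dec2_iso_ef2 H (iso_id _).
move=> D HD.
case: (classic (is_iso (ef1 D))) => H1.
  by exists (I1 f); [left | exact: cover1].
case: (classic (is_iso (ef2 D))) => H2.
  by exists (I2 f); [right; left | exact: cover2].
have [u Hu Hdu] := L3 D (conj HD (conj H1 H2)).
by exists u => //; right; right.
Qed.

Variable R : comUnitRingType.

Lemma conv_isE (a b c : Arr C -> R) : cls_fun a -> cls_fun b ->
  (conv_is a b c <-> forall f, c f = \sum_(D <- D2list f) a (fst2 D) * b (snd2 D)).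
Proof.
move=> Ha Hb; split.
  move=> H f; have [s Hs ->] := H f.
  apply: (repr_sum (@dec2_iso_sym C) (@dec2_iso_trans C)
    (F := fun D => a (fst2 D) * b (snd2 D)) _ Hs (D2listP f)).
  by move=> D D' HD; rewrite (Ha _ _ (dec2_iso_fst HD)) (Hb _ _ (dec2_iso_snd HD)).
by move=> H f; exists (D2list f); [exact: D2listP | exact: H].
Qed.

Lemma D2list_iso (F : Dec2 C -> R) f : arr_is_iso f ->
  \sum_(D <- D2list f) F D = F (I1 f).
Proof.
move=> Hf; rewrite /D2list; case: excluded_middle_informative => H; last by [].
by rewrite big_seq1.
Qed.

Lemma D2list_noniso (F : Dec2 C -> R) f : ~ arr_is_iso f ->
  \sum_(D <- D2list f) F D = F (I1 f) + F (I2 f) + \sum_(D <- L2 f) F D.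
Proof.
move=> Hf; rewrite /D2list; case: excluded_middle_informative => H; first by [].
by rewrite !big_cons addrA.
Qed.

End D2list.

End Part7.
Import Part7.

Module Part8.
Local Open Scope ring_scope.

Lemma eq_big_inlist (T : Type) (V : zmodType) (s : seq T) (F G : T -> V) :
  (forall x, inlist x s -> F x = G x) -> \sum_(x <- s) F x = \sum_(x <- s) G x.
Proof.
elim: s => [|a s IH] H; first by rewrite !big_nil.
rewrite !big_cons H; last by left.
by rewrite IH // => x Hx; apply: H; right.
Qed.

Section Weights.
Variable C : category.
Hypothesis HE : ess_finite_decomp C.
Hypothesis HF : iso_filling C.
Variable R : comUnitRingType.
Variable al : Arr C -> R.
Hypothesis Hal : cls_fun al.
Hypothesis Hu : forall x : Ob C, al (mkArr (idm x)) \is a GRing.unit.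
Implicit Types x y z : Ob C.
Implicit Types f g : Arr C.
Implicit Types d : Dec C.
Implicit Types D : Dec2 C.

Definition ua x := (al (mkArr (idm x)))^-1.

Lemma al_id_iso x y : (exists i : Hom x y, is_iso i) ->
  al (mkArr (idm x)) = al (mkArr (idm y)).
Proof. by move=> H; apply: Hal; exact: arr_iso_ids. Qed.

Lemma ua_iso x y : (exists i : Hom x y, is_iso i) -> ua x = ua y.
Proof. by move=> H; rewrite /ua (al_id_iso H). Qed.

Lemma ua_r x : al (mkArr (idm x)) * ua x = 1.
Proof. exact: mulrV. Qed.

Lemma ua_l x : ua x * al (mkArr (idm x)) = 1.
Proof. exact: mulVr. Qed.

Fixpoint tw x y (p : path x y) : R :=
  match p with
  | pnil _ => 1
  | pcons _ y0 _ f q => al (mkArr f) * ua y0 * tw q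
  end.

Definition dw d := ua (dsrc d) * tw (dpath d).

Lemma tw_papp x y z (p : path x y) (q : path y z) : tw (papp p q) = tw p * tw q.
Proof. by elim: p q => [a|a b c f p IH] q /=; rewrite ?mul1r // IH !mulrA. Qed.

Lemma tw_pisoF x y (p : path x y) : forall x' y' (a : Hom x x') e (p' : path x' y'),
  pisoF p a e p' -> tw p = tw p'.
Proof.
elim: p => [x0|x0 y0 z0 f q IH] x' y' a e p'; case: p' a e => //=.
move=> x1 y1 z1 f' q' a e [Ia [b [E H]]].
have Ib := pisoF_start H.
rewrite (IH _ _ _ _ _ H) (ua_iso (ex_intro _ b Ib)); congr (_ * _ * _).
apply: Hal; exists a, b; split=> //.
Qed.

Lemma dw_iso d d' : dec_iso d d' -> dw d = dw d'.
Proof.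
case/dec_isoP=> a [e H]; rewrite /dw (tw_pisoF H).
by rewrite (ua_iso (ex_intro _ a (pisoF_start H))).
Qed.

Definition W n f := \sum_(c <- lst n f) dw c.

Lemma W_repr n f s : (0 < n)%N -> repr_list (PDn n f) (@dec_iso C) s ->
  W n f = \sum_(c <- s) dw c.
Proof.
move=> Hn Hs; apply: (repr_sum (@dec_iso_sym C) (@dec_iso_trans C) (F := dw) _ (lstP HE f Hn) Hs).
exact: dw_iso.
Qed.

Lemma W_arr n f g : (0 < n)%N -> arr_iso f g -> W n f = W n g.
Proof.
move=> Hn Hfg; apply: W_repr => //.
apply: repr_list_ext (lstP HE g Hn) => d; exact: (PDn_arr_iff _ _ (arr_iso_sym Hfg)).
Qed.

Lemma lst_big n f : (bnd HE f < n)%N -> lst n f = [::].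
Proof.
move=> Hn; case E: (lst n f) => [//|d s].
have Hn0 : (0 < n)%N by apply: leq_ltn_trans Hn.
have [H1 _ _] := lstP HE f Hn0.
have := bndP HE Hn0 (H1 d ltac:(by rewrite E; left)).
by rewrite leqNgt Hn.
Qed.

Lemma W_big n f : (bnd HE f < n)%N -> W n f = 0.
Proof. by move=> H; rewrite /W lst_big // big_nil. Qed.

Definition single f : Dec C := mkDec (pcons (mor f) (pnil (tgt f))).

Lemma single_repr f : repr_list (PDn 1 f) (@dec_iso C) [:: single f].
Proof.
split.
- move=> d [<-|//]; split; last by left.
  split=> //; rewrite /= comp_idl mkArr_eta; exact: arr_iso_refl.
- by split.
move=> d [[Hl Hi] _]; exists (single f); first by left.
case: d Hl Hi => x y p /=; case: p => // x0 y0 z0 f0 q; case: q f0 => // z1 f0 _.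
move=> -[a [b [Ia [Ib E]]]]; rewrite /= comp_idl in E.
apply/dec_isoP; exists a, b; split=> //; exists b; split=> //.
Qed.

Lemma W1 f : W 1 f = ua (src f) * al f * ua (tgt f).
Proof.
rewrite (@W_repr 1 f _ (ltn0Sn 0) (single_repr f)) big_seq1 /dw /= mkArr_eta.
by rewrite mulr1 mulrA.
Qed.

Lemma tw_pre x y z (h : Hom x y) (p : path y z) : (0 < plen p)%N -> is_iso h ->
  tw (pre h p) = al (mkArr (idm y)) * (ua y * tw p).
Proof.
case: p h => //= y0 w0 z0 f q h _ Ih.
rewrite mulrA ua_r mul1r; congr (_ * _ * _).
apply: Hal; exact: arr_iso_precomp.
Qed.

Lemma dw_glue f m k D a b : (0 < m)%N -> (0 < k)%N -> inlist D (L2 f) ->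
  inlist a (lst m (fst2 D)) -> inlist b (lst k (snd2 D)) ->
  dw (glue D a b) = dw a * al (mkArr (idm (e1 D))) * dw b.
Proof.
move=> Hm Hk HD Ha Hb.
have [h [[Ih Hg] ->]] := glueP (Gl_good HE Hm Hk HD Ha Hb).
have [[[Hlb Hib] _] ] := (let: And3 H _ _ := lstP HE (snd2 D) Hk in H) b Hb.
rewrite /dw /= tw_papp tw_pre ?Hlb //.
rewrite (al_id_iso (arr_iso_obj_src Hib)) /=.
by rewrite !mulrA.
Qed.

Lemma W_glue f m k : (0 < m)%N -> (0 < k)%N ->
  W (m + k) f = \sum_(D <- L2 f) W m (fst2 D) * al (mkArr (idm (e1 D))) * W k (snd2 D).
Proof.
move=> Hm Hk.
rewrite (W_repr (ltn_addr _ Hm) (Gl_repr HE HF f Hm Hk)) /Gl big_flatten big_map /=.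
apply: eq_big_inlist => D HD.
rewrite big_flatten big_map /= /W GRing.mulr_suml GRing.mulr_suml.
apply: eq_big_inlist => a Ha.
rewrite big_flatten big_map /= GRing.mulr_sumr.
apply: eq_big_inlist => b Hb.
by rewrite big_seq1 (dw_glue Hm Hk HD Ha Hb).
Qed.

End Weights.

End Part8.
Import Part8.

Module Part9.
Local Open Scope ring_scope.

Lemma bnd_max (T : Type) (s : seq T) (F : T -> nat) D : inlist D s ->
  (F D <= \max_(E <- s) F E)%N.
Proof.
elim: s => //= a s IH [<-|H]; rewrite big_cons; first exact: leq_maxl.
exact: leq_trans (IH H) (leq_maxr _ _).
Qed.

Section Beta.
Variable C : category.
Hypothesis HE : ess_finite_decomp C.
Hypothesis HF : iso_filling C.
Variable R : comUnitRingType.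
Variable al : Arr C -> R.
Hypothesis Hal : cls_fun al.
Hypothesis Hu : forall x : Ob C, al (mkArr (idm x)) \is a GRing.unit.
Implicit Types x y z : Ob C.
Implicit Types f g : Arr C.
Implicit Types d : Dec C.
Implicit Types D : Dec2 C.

Local Notation W := (W al).
Local Notation ua := (ua al).

Definition beta f : R :=
  if excluded_middle_informative (arr_is_iso f) then ua (src f)
  else \sum_(1 <= n < (bnd HE f).+1) (-1) ^+ n * W n f.

Lemma beta_iso f : arr_is_iso f -> beta f = ua (src f).
Proof. by rewrite /beta; case: excluded_middle_informative. Qed.

Lemma beta_ext f K : ~ arr_is_iso f -> (bnd HE f <= K)%N ->
  beta f = \sum_(1 <= n < K.+1) (-1) ^+ n * W n f.
Proof.
move=> Hf HK; rewrite /beta; case: excluded_middle_informative => // Hf2.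
rewrite (@big_cat_nat _ _ _ (bnd HE f).+1 1 K.+1) //=.
rewrite -[LHS]addr0; congr (_ + _); apply/esym; rewrite big_nat_cond.
apply: big1 => i /andP [/andP [Hi _] _].
by rewrite (W_big (HE:=HE)) ?mulr0.
Qed.

Lemma beta_cls : cls_fun beta.
Proof.
move=> f g Hfg.
case: (classic (arr_is_iso f)) => Hf.
  have Hg := arr_iso_is_iso Hfg Hf.
  rewrite !beta_iso //; apply: ua_iso => //; exact: arr_iso_obj_src Hfg.
have Hg : ~ arr_is_iso g by move=> Hg; apply: Hf; exact: arr_iso_is_iso (arr_iso_sym Hfg) Hg.
rewrite (beta_ext Hf (leq_maxl (bnd HE f) (bnd HE g))) (beta_ext Hg (leq_maxr (bnd HE f) (bnd HE g))).
apply: eq_big_nat => n /andP [Hn _]; by rewrite (W_arr HE Hal Hn Hfg).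
Qed.

Lemma L2_noniso f D : inlist D (L2 f) ->
  [/\ D2 f D, ~ arr_is_iso (fst2 D) & ~ arr_is_iso (snd2 D)].
Proof. by move=> HD; have [H1 [H2 H3]] := (let: And3 H _ _ := L2P HE f in H) D HD. Qed.

Lemma W_rec_r f i : (0 < i)%N ->
  W i.+1 f = ua (src f) * \sum_(D <- L2 f) al (fst2 D) * W i (snd2 D).
Proof.
move=> Hi; rewrite -add1n (@W_glue _ HE HF _ _ Hal Hu f 1 i (ltn0Sn 0) Hi) GRing.mulr_sumr.
apply: eq_big_inlist => D HD; have [HD2 _ _] := L2_noniso HD.
rewrite (W1 HE Hal) -!mulrA (mulrA (ua (e1 D))) (ua_l Hu) mul1r.
congr (_ * _); apply: ua_iso => //.
exact: arr_iso_obj_src HD2.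
Qed.

Lemma W_rec_l f i : (0 < i)%N ->
  W i.+1 f = (\sum_(D <- L2 f) W i (fst2 D) * al (snd2 D)) * ua (tgt f).
Proof.
move=> Hi; rewrite -addn1 (@W_glue _ HE HF _ _ Hal Hu f i 1 Hi (ltn0Sn 0)) GRing.mulr_suml.
apply: eq_big_inlist => D HD; have [HD2 _ _] := L2_noniso HD.
rewrite (W1 HE Hal) !mulrA -(mulrA _ (al (mkArr (idm (e1 D)))) (ua (e1 D))) (ua_r Hu) mulr1.
congr (_ * _); apply: ua_iso => //.
exact: arr_iso_obj_tgt HD2.
Qed.

Lemma beta_rec_r f : ~ arr_is_iso f ->
  beta f = - (ua (src f) * al f * ua (tgt f))
           - ua (src f) * \sum_(D <- L2 f) al (fst2 D) * beta (snd2 D).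
Proof.
move=> Hf.
set K := maxn (bnd HE f) (\max_(D <- L2 f) bnd HE (snd2 D)).
rewrite (beta_ext Hf (K := K.+1)); last exact: leq_trans (leq_maxl _ _) (leqnSn _).
rewrite big_nat_recl // expr1 mulN1r (W1 HE Hal).
congr (_ + _).
rewrite (eq_big_nat _ _ (F2 := fun i => - (ua (src f) *
   \sum_(D <- L2 f) al (fst2 D) * ((-1) ^+ i * W i (snd2 D))))); last first.
  move=> i /andP [Hi _]; rewrite W_rec_r // exprS mulN1r mulNr; congr (- _).
  rewrite mulrCA; congr (_ * _); rewrite GRing.mulr_sumr; apply: eq_big_inlist => D _.
  by rewrite mulrCA.
rewrite sumrN -GRing.mulr_sumr exchange_big /=; congr (- (_ * _)).
apply: eq_big_inlist => D HD; rewrite -GRing.mulr_sumr; congr (_ * _).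
have [_ _ Hs] := L2_noniso HD.
rewrite (beta_ext Hs (K := K)) //.
exact: leq_trans (bnd_max (fun E => bnd HE (snd2 E)) HD) (leq_maxr _ _).
Qed.

Lemma beta_rec_l f : ~ arr_is_iso f ->
  beta f = - (ua (src f) * al f * ua (tgt f))
           - (\sum_(D <- L2 f) beta (fst2 D) * al (snd2 D)) * ua (tgt f).
Proof.
move=> Hf.
set K := maxn (bnd HE f) (\max_(D <- L2 f) bnd HE (fst2 D)).
rewrite (beta_ext Hf (K := K.+1)); last exact: leq_trans (leq_maxl _ _) (leqnSn _).
rewrite big_nat_recl // expr1 mulN1r (W1 HE Hal).
congr (_ + _).
rewrite (eq_big_nat _ _ (F2 := fun i => - ((
   \sum_(D <- L2 f) ((-1) ^+ i * W i (fst2 D)) * al (snd2 D)) * ua (tgt f)))); last first.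
  move=> i /andP [Hi _]; rewrite W_rec_l // exprS mulN1r mulNr; congr (- _).
  rewrite mulrA; congr (_ * _); rewrite GRing.mulr_sumr; apply: eq_big_inlist => D _.
  by rewrite mulrA.
rewrite sumrN -GRing.mulr_suml exchange_big /=; congr (- (_ * _)).
apply: eq_big_inlist => D HD; rewrite -GRing.mulr_suml; congr (_ * _).
have [_ Hs _] := L2_noniso HD.
rewrite (beta_ext Hs (K := K)) //.
exact: leq_trans (bnd_max (fun E => bnd HE (fst2 E)) HD) (leq_maxr _ _).
Qed.

Lemma beta_right : conv_is al beta (@conv_unit C R).
Proof.
apply/(conv_isE HE (@conv_unit C R) Hal beta_cls) => f; rewrite /conv_unit.
case: excluded_middle_informative => Hf.
  rewrite D2list_iso // /I1 /fst2 /snd2 /= mkArr_eta beta_iso //; exact: (esym (ua_r Hu _)).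
rewrite D2list_noniso // /I1 /I2 /fst2 /snd2 /= mkArr_eta (beta_rec_r Hf) beta_iso /=; last exact: iso_id.
have := ua_r Hu (src f); set u1 := al _ => Hu1.
set S := \sum_(_ <- _) _.
have -> : u1 * (- (ua (src f) * al f * ua (tgt f)) - ua (src f) * S) =
          - ((u1 * ua (src f)) * al f * ua (tgt f)) - (u1 * ua (src f)) * S by ring.
by rewrite Hu1; ring.
Qed.

Lemma beta_left : conv_is beta al (@conv_unit C R).
Proof.
apply/(conv_isE HE (@conv_unit C R) beta_cls Hal) => f; rewrite /conv_unit.
case: excluded_middle_informative => Hf.
  rewrite D2list_iso // /I1 /fst2 /snd2 /= mkArr_eta beta_iso /=; last exact: iso_id.
  have -> : al f = al (mkArr (idm (src f))).
    apply/esym/Hal; case: f Hf => x y f Hf; exists (idm x), f; split; first exact: iso_id.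
    by split=> //=; rewrite comp_idr comp_idl.
  exact: (esym (ua_l Hu _)).
rewrite D2list_noniso // /I1 /I2 /fst2 /snd2 /= mkArr_eta (beta_rec_l Hf) beta_iso /=; last exact: iso_id.
have := ua_l Hu (tgt f); set u1 := al _ => Hu1.
set S := \sum_(_ <- _) _.
have -> : ua (src f) * al f + (- (ua (src f) * al f * ua (tgt f)) - S * ua (tgt f)) * u1 + S
   = ua (src f) * al f - ua (src f) * al f * (ua (tgt f) * u1) - S * (ua (tgt f) * u1) + S by ring.
by rewrite Hu1; ring.
Qed.

End Beta.

End Part9.
Import Part9.

Module Part10.
Local Open Scope ring_scope.

Section Uniq.
Variable C : category.
Hypothesis HE : ess_finite_decomp C.
Hypothesis HF : iso_filling C.
Variable R : comUnitRingType.
Variable al : Arr C -> R.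
Hypothesis Hal : cls_fun al.
Hypothesis Hu : forall x : Ob C, al (mkArr (idm x)) \is a GRing.unit.

Lemma conv_unit_iso (f : Arr C) : arr_is_iso f -> @conv_unit C R f = 1.
Proof. by rewrite /conv_unit; case: excluded_middle_informative. Qed.

Lemma conv_unit_noniso (f : Arr C) : ~ arr_is_iso f -> @conv_unit C R f = 0.
Proof. by rewrite /conv_unit; case: excluded_middle_informative. Qed.

Lemma right_inv_iso (b : Arr C -> R) : cls_fun b -> conv_is al b (@conv_unit C R) ->
  forall f, arr_is_iso f -> b f = ua al (src f).
Proof.
move=> Hb H f Hf.
have := proj1 (conv_isE HE _ Hal Hb) H f.
rewrite conv_unit_iso // D2list_iso // /I1 /fst2 /snd2 /= mkArr_eta => E.
by rewrite -[b f]mul1r -(ua_l Hu (src f)) -mulrA -E mulr1.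
Qed.

Lemma uniq_right (b b' : Arr C -> R) : cls_fun b -> cls_fun b' ->
  conv_is al b (@conv_unit C R) -> conv_is al b' (@conv_unit C R) ->
  forall f, b f = b' f.
Proof.
move=> Hb Hb' H H'.
have Eb := proj1 (conv_isE HE _ Hal Hb) H.
have Eb' := proj1 (conv_isE HE _ Hal Hb') H'.
suff: forall K f, (forall n d, (0 < n)%N -> PDn n f d -> (n <= K)%N) -> b f = b' f.
  by move=> HK f; apply: (HK (bnd HE f)) => n d; exact: bndP.
elim=> [|K IH] f Hbd; case: (classic (arr_is_iso f)) => Hf.
- by rewrite (right_inv_iso Hb H Hf) (right_inv_iso Hb' H' Hf).
- have [H1 _ _] := single_repr f.
  by have := Hbd 1%N (single f) (ltn0Sn 0) (H1 _ (or_introl erefl)).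
- by rewrite (right_inv_iso Hb H Hf) (right_inv_iso Hb' H' Hf).
have E1 := Eb f; have E2 := Eb' f.
rewrite conv_unit_noniso // D2list_noniso // /I1 /I2 /fst2 /snd2 /= mkArr_eta in E1.
rewrite conv_unit_noniso // D2list_noniso // /I1 /I2 /fst2 /snd2 /= mkArr_eta in E2.
have Hy : arr_is_iso (mkArr (idm (tgt f))) by exact: iso_id.
rewrite (right_inv_iso Hb H Hy) in E1; rewrite (right_inv_iso Hb' H' Hy) in E2.
have ES : \sum_(D <- L2 f) al (fst2 D) * b (snd2 D) =
          \sum_(D <- L2 f) al (fst2 D) * b' (snd2 D).
  apply: eq_big_inlist => D HD; congr (_ * _); apply: IH => n c Hn Hc.
  have [_ _ Hcov] := lstP HE (snd2 D) Hn.
  have [c' Hc' _] := Hcov c Hc.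
  have [Ha1 _ Hacov] := lstP HE (fst2 D) (ltn0Sn 0).
  have [a' Ha' _] := Hacov (single (fst2 D)) (let: And3 H1 _ _ := single_repr (fst2 D) in H1 _ (or_introl erefl)).
  have Hg := Gl_mem HE (ltn0Sn 0) Hn (proj2 (inlist_Gl f 1 n _)
     (ex_intro _ D (ex_intro _ a' (ex_intro _ c' (And4 HD Ha' Hc' erefl))))).
  exact: (Hbd _ _ (ltn0Sn _) Hg).
rewrite ES in E1.
have E3 : al (mkArr (idm (src f))) * b f = al (mkArr (idm (src f))) * b' f.
  by apply: (addIr (al f * ua al (tgt f) + \sum_(D <- L2 f) al (fst2 D) * b' (snd2 D)));
     rewrite !addrA -E1 -E2.
have := congr1 (fun r => ua al (src f) * r) E3.
by rewrite !mulrA (ua_l Hu) !mul1r.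
Qed.

End Uniq.

End Part10.
Import Part10.

Module Part11.
Local Open Scope ring_scope.

Lemma tw_one (C : category) (R : comUnitRingType) x y (p : path x y) :
  tw (fun _ : Arr C => 1 : R) p = 1.
Proof. by elim: p => //= a b c f q ->; rewrite /ua invr1 !mulr1. Qed.

Lemma sum_ones (T : Type) (R : comUnitRingType) (s : seq T) :
  \sum_(x <- s) (1 : R) = (size s)%:R.
Proof.
elim: s => [|a s IH]; first by rewrite big_nil.
by rewrite big_cons IH /= -add1n natrD.
Qed.


End Part11.
Import Part11.

Local Open Scope ring_scope.

Theorem theorem8p3 (C : category) (R : comUnitAlgType rat) :
  ess_finite_decomp C -> iso_filling C ->
  [/\ (forall alpha : Arr C -> R, cls_fun alpha ->
         conv_invertible alpha <->
         (forall x : Ob C, alpha (mkArr (idm x)) \is a GRing.unit)),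
      conv_invertible (fun _ : Arr C => 1 : R) &
      forall mu : Arr C -> R, conv_inverse (fun _ : Arr C => 1 : R) mu ->
        (forall f : Arr C, arr_is_iso f -> mu f = 1) /\
        (forall f : Arr C, ~ arr_is_iso f ->
           exists (N : nat) (k : nat -> nat),
             [/\ forall n, (0 < n)%N -> nclasses (PDn n f) (@dec_iso C) (k n),
                 forall n, (N < n)%N -> k n = 0%N &
                 mu f = \sum_(1 <= n < N.+1) (-1) ^+ n * (k n)%:R])].
Proof.
move=> HE HF.
have part1 : forall alpha : Arr C -> R, cls_fun alpha ->
    conv_invertible alpha <-> (forall x : Ob C, alpha (mkArr (idm x)) \is a GRing.unit).
  move=> al Hal; split.
    case=> b [Hb H1 H2] x.
    have := proj1 (conv_isE HE _ Hal Hb) H1 (mkArr (idm x)).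
    rewrite conv_unit_iso; last exact: iso_id.
    rewrite D2list_iso /I1 /fst2 /snd2 /=; last exact: iso_id.
    move=> E; apply/unitrP; exists (b (mkArr (idm x))).
    by split; [rewrite mulrC|]; rewrite -E.
  move=> Hu; exists (beta HE al); split.
  - exact: beta_cls.
  - exact: beta_right.
  - exact: beta_left.
have Hxi : cls_fun (fun _ : Arr C => 1 : R) by [].
have Hxu : forall x : Ob C, (fun _ : Arr C => 1 : R) (mkArr (idm x)) \is a GRing.unit.
  by move=> x; exact: unitr1.
split=> //; first by apply/part1.
move=> mu [Hmu H1 H2].
have Emu : forall f, mu f = beta HE (fun _ : Arr C => 1 : R) f.
  exact: (uniq_right HE Hxi Hxu Hmu (beta_cls HE Hxi) H1 (beta_right HE HF Hxi Hxu)).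
split.
  by move=> f Hf; rewrite Emu beta_iso // /ua invr1.
move=> f Hf; exists (bnd HE f), (fun n => size (lst n f)); split.
- by move=> n Hn; exists (lst n f) => //; exact: lstP.
- by move=> n Hn; rewrite lst_big.
rewrite Emu /beta; case: excluded_middle_informative => // Hf2.
apply: eq_big_nat => n _; congr (_ * _).
rewrite /W (eq_big_inlist (G := fun _ => 1)); first exact: sum_ones.
by move=> c _; rewrite /dw tw_one /ua invr1 mul1r.
Qed.
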